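(* Let $m,\gamma\in\mathbb{N}$ with $2\gamma<m$, and let $$P_{m,\gamma}(x):=\frac{1}{\sqrt{\gamma}}\sum_{v=0}^{2^\gamma-1}\sum_{j=0}^{\gamma-1}w_{2^{m-\gamma}v+2^{m-2\gamma}(v\oplus 2^j)}(x).$$ Let $\lambda=\{\lambda_n\}_{n\ge1}$ be a nondecreasing sequence of integers with $1\le\lambda_n\le n$. Let $x\in[0,1)$ and let $\ell(x)$ be an integer with $\ell(x)\in[2^{m-\gamma},2^m)\cap 2^{m-2\gamma}\mathbb{N}$ and $|S_{\ell(x)}(P_{m,\gamma};x)|\ge\frac14\sqrt{\gamma}$ (such an integer exists for every $x$). If $\lambda_{\ell(x)}<2^{m-2\gamma}$, then $$V^{(\lambda)}_{\ell(x)}(P_{m,\gamma};x)=S_{\ell(x)}(P_{m,\gamma};x),$$ and in particular $|V^{(\lambda)}_{\ell(x)}(P_{m,\gamma};x)|\ge\frac14\sqrt{\gamma}$.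
   Context: For nonnegative integers $n=\sum_j n_j2^j$, $m=\sum_j m_j2^j$ (binary expansions), $n\oplus m:=\sum_{j\ge0}|n_j-m_j|2^j$. Rademacher functions: $r_j(x):=(-1)^{\lfloor 2^{j+1}x\rfloor}$ on $[0,1)$; Walsh--Paley functions: $w_n(x):=\prod_{j\ge0}r_j(x)^{n_j}$. For $f\in L^1([0,1))$, $\widehat f(n):=\int_0^1 f w_n$, $S_n(f;x):=\sum_{k=0}^{n-1}\widehat f(k)w_k(x)$ (so $S_0=0$), and the de la Vallée Poussin means are $V_n^{(\lambda)}(f;x):=\frac{1}{\lambda_n+1}\sum_{k=n-\lambda_n}^{n}S_k(f;x)$. $2^s\mathbb{N}$ denotes the positive integer multiples of $2^s$. *)

(* Defs.v *)
From Stdlib Require Import Reals Arith.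
From Coquelicot Require Import Coquelicot.
Open Scope R_scope.

Fixpoint sumR (f : nat -> R) (n : nat) : R :=
  match n with
  | O => 0
  | S k => sumR f k + f k
  end.

Fixpoint prodR (f : nat -> R) (n : nat) : R :=
  match n with
  | O => 1
  | S k => prodR f k * f k
  end.

Definition rademacher (j : nat) (x : R) : R :=
  if Z.even (Int_part (2 ^ (S j) * x)) then 1 else -1.

(* Walsh--Paley function w_n(x) = prod_j r_j(x)^{n_j}; bits j >= n of n vanish. *)
Definition walsh (n : nat) (x : R) : R :=
  prodR (fun j => if Nat.testbit n j then rademacher j x else 1) n.

(* n (+) m = sum_j |n_j - m_j| 2^j, i.e. bitwise xor *)
Definition dxor (n m : nat) : nat := Nat.lxor n m.

Definition walsh_coef (f : R -> R) (n : nat) : R :=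
  RInt (fun t => f t * walsh n t) 0 1.

Definition walsh_S (n : nat) (f : R -> R) (x : R) : R :=
  sumR (fun k => walsh_coef f k * walsh k x) n.

Definition vallee_poussin (lam : nat -> nat) (n : nat) (f : R -> R) (x : R) : R :=
  / (INR (lam n) + 1) *
  sumR (fun i => walsh_S (n - lam n + i)%nat f x) (S (lam n)).

Definition P_poly (m g : nat) (x : R) : R :=
  / sqrt (INR g) *
  sumR (fun v =>
     sumR (fun j =>
        walsh (2 ^ (m - g) * v + 2 ^ (m - 2 * g) * dxor v (2 ^ j))%nat x) g)
     (2 ^ g)%nat.

(* Main.v *)
Require Import Defs.
From Stdlib Require Import Reals Arith Lia Lra Classical.
From Coquelicot Require Import Coquelicot.
Open Scope R_scope.

Lemma Int_part_addZ (y : R) (z : Z) : Int_part (y + IZR z) = (Int_part y + z)%Z.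
Proof.
  unfold Int_part.
  assert (H: (up y + z)%Z = up (y + IZR z)).
  { destruct (archimed y) as [H1 H2]. apply tech_up; rewrite plus_IZR; lra. }
  rewrite <- H. lia.
Qed.

Lemma rad_shift (j : nat) (x : R) (z : Z) :
  rademacher j (x + IZR z / 2 ^ (S j)) =
  if Z.even z then rademacher j x else - rademacher j x.
Proof.
  unfold rademacher.
  assert (Hp : 2 ^ (S j) <> 0) by (apply pow_nonzero; lra).
  replace (2 ^ S j * (x + IZR z / 2 ^ S j)) with (2 ^ S j * x + IZR z) by (field; auto).
  rewrite Int_part_addZ, Z.even_add.
  destruct (Z.even (Int_part (2 ^ S j * x))), (Z.even z); simpl; lra.
Qed.

Lemma rad_period (j : nat) (x : R) : rademacher j (x + 1) = rademacher j x.
Proof.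
  assert (Hp : 2 ^ (S j) <> 0) by (apply pow_nonzero; lra).
  replace (x + 1) with (x + IZR (2 * (2 ^ Z.of_nat j)) / 2 ^ (S j)).
  - rewrite rad_shift. rewrite Z.even_mul. reflexivity.
  - rewrite mult_IZR, <- pow_IZR. simpl. field. simpl in Hp. lra.
Qed.

Lemma rad_sq j x : rademacher j x * rademacher j x = 1.
Proof. unfold rademacher; destruct (Z.even _); ring. Qed.

Lemma floor_grid (d i : nat) (y : R) : (0 < d)%nat ->
  INR i / INR d < y < (INR i + 1) / INR d -> Int_part y = Z.of_nat (i / d).
Proof.
  intros Hd [H1 H2].
  assert (Hdr : 0 < INR d) by (apply lt_0_INR; lia).
  pose proof (Nat.div_mod i d ltac:(lia)) as Hm.
  pose proof (Nat.mod_upper_bound i d ltac:(lia)) as Hb.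
  set (q := (i / d)%nat) in *. set (r := (i mod d)%nat) in *.
  assert (E1 : (d * q <= i)%nat) by lia.
  assert (E2 : (i + 1 <= d * q + d)%nat) by lia.
  apply le_INR in E1, E2. rewrite mult_INR in E1. rewrite !plus_INR, mult_INR in E2.
  simpl in E2.
  assert (Q1 : INR q <= INR i / INR d).
  { apply (Rmult_le_reg_r (INR d)); auto. field_simplify; lra. }
  assert (Q2 : (INR i + 1) / INR d <= INR q + 1).
  { apply (Rmult_le_reg_r (INR d)); auto. field_simplify; lra. }
  unfold Int_part.
  assert (H: (Z.of_nat q + 1)%Z = up y).
  { apply tech_up; rewrite plus_IZR, <- INR_IZR_INZ; simpl; lra. }
  rewrite <- H. lia.
Qed.
Definition W (N n : nat) (x : R) : R :=
  prodR (fun j => if Nat.testbit n j then rademacher j x else 1) N.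

Lemma testbit_big n j : (n <= j)%nat -> Nat.testbit n j = false.
Proof.
  intros H. destruct n. apply Nat.bits_0.
  apply Nat.bits_above_log2. pose proof (Nat.log2_lt_lin (S n)). lia.
Qed.

Lemma walsh_W N n x : (n <= N)%nat -> walsh n x = W N n x.
Proof.
  intros H. unfold walsh, W. replace N with (n + (N - n))%nat by lia.
  induction (N - n)%nat as [|d IH].
  - now rewrite Nat.add_0_r.
  - rewrite Nat.add_succ_r. simpl. rewrite <- IH, testbit_big by lia. ring.
Qed.

Lemma W_mul N a b x : W N a x * W N b x = W N (Nat.lxor a b) x.
Proof.
  unfold W. induction N as [|N IH]; simpl. ring.
  rewrite <- IH, Nat.lxor_spec.
  pose proof (rad_sq N x) as Hs.
  destruct (Nat.testbit a N), (Nat.testbit b N); simpl; try ring.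
  set (r := rademacher N x) in *.
  set (A := prodR _ N). set (B := prodR _ N).
  transitivity (A * B * (r * r)). ring. rewrite Hs. ring.
Qed.

Lemma W_period N n x : W N n (x + 1) = W N n x.
Proof.
  unfold W. induction N as [|N IH]; simpl. ring.
  rewrite IH, rad_period. reflexivity.
Qed.

Lemma rad_shiftJ J j x : (J <= j)%nat ->
  rademacher j (x + / 2 ^ (S J)) =
  if Nat.eqb j J then - rademacher j x else rademacher j x.
Proof.
  intros H. replace j with (J + (j - J))%nat by lia.
  set (d := (j - J)%nat).
  replace (x + / 2 ^ S J) with (x + IZR (2 ^ Z.of_nat d) / 2 ^ S (J + d)).
  - rewrite rad_shift. destruct d as [|d].
    + rewrite Nat.add_0_r, Nat.eqb_refl. reflexivity.
    + replace (Nat.eqb (J + S d) J) with false by (symmetry; apply Nat.eqb_neq; lia).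
      replace (2 ^ Z.of_nat (S d))%Z with (2 * 2 ^ Z.of_nat d)%Z.
      * rewrite Z.even_mul. reflexivity.
      * rewrite Znat.Nat2Z.inj_succ, Z.pow_succ_r; lia.
  - rewrite <- pow_IZR. f_equal. rewrite <- Nat.add_succ_l, pow_add.
    field. split; apply pow_nonzero; lra.
Qed.

Lemma W_shift N n J x : Nat.testbit n J = true ->
  (forall i, (i < J)%nat -> Nat.testbit n i = false) ->
  W N n (x + / 2 ^ (S J)) = (if Nat.leb N J then 1 else -1) * W N n x.
Proof.
  intros HJ Hlow. unfold W. induction N as [|N IH]; cbn [prodR]. simpl; ring.
  rewrite IH.
  destruct (Nat.lt_total N J) as [Hl|[He|Hg]].
  - rewrite Hlow by auto.
    replace (Nat.leb N J) with true by (symmetry; apply Nat.leb_le; lia).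
    replace (Nat.leb (S N) J) with true by (symmetry; apply Nat.leb_le; lia). ring.
  - subst N. rewrite HJ, rad_shiftJ, Nat.eqb_refl, Nat.leb_refl by lia.
    replace (Nat.leb (S J) J) with false by (symmetry; apply Nat.leb_nle; lia). ring.
  - rewrite rad_shiftJ by lia.
    replace (Nat.eqb N J) with false by (symmetry; apply Nat.eqb_neq; lia).
    replace (Nat.leb N J) with false by (symmetry; apply Nat.leb_nle; lia).
    replace (Nat.leb (S N) J) with false by (symmetry; apply Nat.leb_nle; lia). ring.
Qed.

Lemma rad_const N j i x y : (j < N)%nat ->
  INR i / 2 ^ N < x < (INR i + 1) / 2 ^ N ->
  INR i / 2 ^ N < y < (INR i + 1) / 2 ^ N ->
  rademacher j x = rademacher j y.
Proof.
  intros Hj Hx Hy. unfold rademacher.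
  assert (Hd : (0 < 2 ^ (N - S j))%nat) by (apply Nat.neq_0_lt_0, Nat.pow_nonzero; lia).
  assert (E : 2 ^ N = 2 ^ S j * INR (2 ^ (N - S j))).
  { rewrite pow_INR. simpl (INR 2). replace (1+1) with 2 by ring.
    rewrite <- pow_add. f_equal. lia. }
  assert (P1 : 0 < 2 ^ S j) by (apply pow_lt; lra).
  assert (P2 : 0 < INR (2 ^ (N - S j))) by (apply lt_0_INR; lia).
  rewrite E in Hx, Hy.
  assert (G : forall z, INR i / (2 ^ S j * INR (2 ^ (N - S j))) < z <
      (INR i + 1) / (2 ^ S j * INR (2 ^ (N - S j))) ->
      Int_part (2 ^ S j * z) = Z.of_nat (i / 2 ^ (N - S j))).
  { intros z [Z1 Z2]. apply floor_grid; auto. split.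
    - apply (Rmult_lt_reg_r (/ 2 ^ S j)). apply Rinv_0_lt_compat; auto.
      replace (2 ^ S j * z * / 2 ^ S j) with z by (field; lra).
      replace (INR i / INR (2 ^ (N - S j)) * / 2 ^ S j) with
        (INR i / (2 ^ S j * INR (2 ^ (N - S j)))) by (field; lra). auto.
    - apply (Rmult_lt_reg_r (/ 2 ^ S j)). apply Rinv_0_lt_compat; auto.
      replace (2 ^ S j * z * / 2 ^ S j) with z by (field; lra).
      replace ((INR i + 1) / INR (2 ^ (N - S j)) * / 2 ^ S j) with
        ((INR i + 1) / (2 ^ S j * INR (2 ^ (N - S j)))) by (field; lra). auto. }
  rewrite (G x Hx), (G y Hy). reflexivity.
Qed.

Lemma W_const N n i x y :
  INR i / 2 ^ N < x < (INR i + 1) / 2 ^ N ->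
  INR i / 2 ^ N < y < (INR i + 1) / 2 ^ N ->
  W N n x = W N n y.
Proof.
  intros Hx Hy. unfold W.
  assert (forall M, (M <= N)%nat ->
    prodR (fun j => if Nat.testbit n j then rademacher j x else 1) M =
    prodR (fun j => if Nat.testbit n j then rademacher j y else 1) M).
  { induction M as [|M IH]; intros HM; simpl. reflexivity.
    rewrite IH by lia. rewrite (rad_const N M i x y) by (auto; lia). reflexivity. }
  apply H. lia.
Qed.

Lemma step_ex (f : R -> R) (M : R) : 0 < M ->
  (forall (i : nat) x y, INR i / M < x < (INR i + 1) / M ->
      INR i / M < y < (INR i + 1) / M -> f x = f y) ->
  forall k : nat, ex_RInt f 0 (INR k / M).
Proof.
  intros HM Hc k. induction k as [|k IH].
  - replace (INR 0 / M) with 0 by (simpl; field; lra). apply ex_RInt_point.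
  - apply ex_RInt_Chasles with (INR k / M); auto.
    rewrite S_INR.
    assert (Hlt : INR k / M < (INR k + 1) / M) by (apply Rmult_lt_compat_r; [apply Rinv_0_lt_compat; auto | lra]).
    set (mid := (INR k + /2) / M).
    assert (Hm : INR k / M < mid < (INR k + 1) / M).
    { unfold mid; split; apply Rmult_lt_compat_r; try (apply Rinv_0_lt_compat; auto); lra. }
    apply ex_RInt_ext with (fun _ => f mid).
    + intros z Hz. rewrite Rmin_left, Rmax_right in Hz by lra. apply (Hc k); auto.
    + apply ex_RInt_const.
Qed.

Lemma W_ex N n : ex_RInt (W N n) 0 2.
Proof.
  assert (HM : 0 < 2 ^ N) by (apply pow_lt; lra).
  replace 2 with (INR (2 * 2 ^ N) / 2 ^ N).
  - apply step_ex; auto. intros i x y Hx Hy. apply (W_const N n i); auto.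
  - rewrite mult_INR, pow_INR. replace (INR 2) with 2 by (simpl; lra). field. lra.
Qed.

Lemma scal1R (u : R) : scal 1 u = u.
Proof. apply (scal_one (K:=R_AbsRing)). Qed.

Lemma integral_zero (f : R -> R) (h : R) : ex_RInt f 0 2 ->
  (forall x, f (x + 1) = f x) -> 0 < h < 1 -> (forall x, f (x + h) = - f x) ->
  is_RInt f 0 1 0.
Proof.
  intros Hex Hp Hh Hs.
  assert (E01 : ex_RInt f 0 1) by (apply (@ex_RInt_Chasles_1 R_CompleteNormedModule) with 2; auto; lra).
  assert (E0h1 : ex_RInt f 0 (1 + h)) by (apply (@ex_RInt_Chasles_1 R_CompleteNormedModule) with 2; auto; lra).
  assert (E0h : ex_RInt f 0 h) by (apply (@ex_RInt_Chasles_1 R_CompleteNormedModule) with 1; auto; lra).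
  assert (Eh1 : ex_RInt f h 1) by (apply (@ex_RInt_Chasles_2 R_CompleteNormedModule) with 0; auto; lra).
  assert (E11h : ex_RInt f 1 (1 + h)) by (apply (@ex_RInt_Chasles_2 R_CompleteNormedModule) with 0; auto; lra).
  assert (Eh1h : ex_RInt f h (1 + h)) by (apply (@ex_RInt_Chasles_2 R_CompleteNormedModule) with 0; auto; lra).
  pose proof (@RInt_Chasles R_CompleteNormedModule f 0 h 1 E0h Eh1) as C1.
  pose proof (@RInt_Chasles R_CompleteNormedModule f h 1 (1 + h) Eh1 E11h) as C2.
  assert (C3 : RInt f 1 (1 + h) = RInt f 0 h).
  { assert (Ex : ex_RInt f (1 * 0 + 1) (1 * h + 1)).
    { replace (1 * 0 + 1) with 1 by ring. replace (1 * h + 1) with (1 + h) by ring. auto. }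
    pose proof (@RInt_comp_lin R_CompleteNormedModule f 1 1 0 h Ex) as L.
    replace (1 * 0 + 1) with 1 in L by ring. replace (1 * h + 1) with (1 + h) in L by ring.
    rewrite <- L. apply RInt_ext. intros z _. rewrite scal1R.
    replace (1 * z + 1) with (z + 1) by ring. auto. }
  assert (C4 : RInt f h (1 + h) = - RInt f 0 1).
  { assert (Ex : ex_RInt f (1 * 0 + h) (1 * 1 + h)).
    { replace (1 * 0 + h) with h by ring. replace (1 * 1 + h) with (1 + h) by ring. auto. }
    pose proof (@RInt_comp_lin R_CompleteNormedModule f 1 h 0 1 Ex) as L.
    replace (1 * 0 + h) with h in L by ring. replace (1 * 1 + h) with (1 + h) in L by ring.
    rewrite <- L. rewrite (RInt_ext _ (fun z => opp (f z))).
    - exact (@RInt_opp R_CompleteNormedModule f 0 1 E01).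
    - intros z _. rewrite scal1R. replace (1 * z + h) with (z + h) by ring. rewrite Hs. reflexivity. }
  assert (Z : RInt f 0 1 = 0).
  { change plus with Rplus in C1, C2. lra. }
  pose proof (@RInt_correct R_CompleteNormedModule f 0 1 E01) as K. rewrite Z in K. exact K.
Qed.

Lemma min_bit (n j : nat) : Nat.testbit n j = true ->
  exists J, Nat.testbit n J = true /\ forall i, (i < J)%nat -> Nat.testbit n i = false.
Proof.
  induction j as [j IH] using (well_founded_induction lt_wf). intros Hj.
  destruct (classic (exists i, (i < j)%nat /\ Nat.testbit n i = true)) as [[i [Hi Ht]]|Hn].
  - apply (IH i Hi Ht).
  - exists j. split; auto. intros i Hi. destruct (Nat.testbit n i) eqn:E; auto.
    exfalso. apply Hn. eauto.
Qed.

Lemma walsh_orth a k : a <> k -> is_RInt (fun t => walsh a t * walsh k t) 0 1 0.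
Proof.
  intros Hak. set (N := (a + k)%nat). set (n := Nat.lxor a k).
  assert (Hn : n <> 0%nat) by (unfold n; rewrite Nat.lxor_eq_0_iff; auto).
  destruct (min_bit n _ (Nat.bit_log2 n Hn)) as [J [HJ Hlow]].
  assert (HJN : (J < N)%nat).
  { destruct (Nat.lt_ge_cases J N) as [H|H]; auto.
    unfold n in HJ. rewrite Nat.lxor_spec, !testbit_big in HJ by (unfold N in H; lia).
    discriminate. }
  apply is_RInt_ext with (W N n).
  { intros t _. unfold n. rewrite <- W_mul, <- !walsh_W by (unfold N; lia). reflexivity. }
  apply integral_zero with (/ 2 ^ S J).
  - apply W_ex.
  - intros; apply W_period.
  - assert (2 <= 2 ^ S J).
    { simpl. assert (1 <= 2 ^ J) by (apply pow_R1_Rle; lra). lra. }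
    split. apply Rinv_0_lt_compat; lra.
    rewrite <- Rinv_1. apply Rinv_lt_contravar; lra.
  - intros x. rewrite (W_shift N n J x HJ Hlow).
    replace (Nat.leb N J) with false by (symmetry; apply Nat.leb_nle; lia). ring.
Qed.

Lemma is_RInt_sumR (F : nat -> R -> R) (n : nat) :
  (forall i, (i < n)%nat -> is_RInt (F i) 0 1 0) ->
  is_RInt (fun t => sumR (fun i => F i t) n) 0 1 0.
Proof.
  induction n as [|n IH]; intros H; simpl.
  - pose proof (@is_RInt_const R_NormedModule 0 1 0) as K.
    match type of K with is_RInt _ _ _ ?v => replace v with (0:R) in K end.
    exact K. cbn. unfold mult; cbn. ring.
  - pose proof (is_RInt_plus _ _ 0 1 0 0 (IH (fun i Hi => H i ltac:(lia))) (H n ltac:(lia))) as K.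
    match type of K with is_RInt _ _ _ ?v => replace v with (0:R) in K end.
    2: { cbn. ring. }
    exact K.
Qed.

Lemma sumR_mul_r f n c : sumR f n * c = sumR (fun i => f i * c) n.
Proof. induction n; simpl. ring. rewrite <- IHn. ring. Qed.

Lemma sumR_ext f g n : (forall i, (i < n)%nat -> f i = g i) -> sumR f n = sumR g n.
Proof. induction n; intros H; simpl. reflexivity. rewrite IHn by (intros; apply H; lia). rewrite H by lia. reflexivity. Qed.

Lemma coef_zero m g k : (2 * g < m)%nat -> ~ Nat.divide (2 ^ (m - 2 * g)) k ->
  walsh_coef (P_poly m g) k = 0.
Proof.
  intros Hm Hd. unfold walsh_coef. apply is_RInt_unique.
  apply is_RInt_ext with (fun t => scal (/ sqrt (INR g))
     (sumR (fun v => sumR (fun j =>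
        walsh (2 ^ (m - g) * v + 2 ^ (m - 2 * g) * dxor v (2 ^ j))%nat t * walsh k t) g) (2 ^ g)%nat)).
  { intros t _. unfold P_poly. change scal with Rmult. simpl. unfold mult. simpl.
    rewrite Rmult_assoc. f_equal. rewrite sumR_mul_r.
    apply sumR_ext. intros v _. symmetry. apply sumR_mul_r. }
  replace (0:R) with (scal (/ sqrt (INR g)) (0:R)) at 2 by (cbn; unfold mult; cbn; ring).
  apply (@is_RInt_scal R_NormedModule). apply is_RInt_sumR. intros v _. apply (is_RInt_sumR (fun j t => _)).
  intros j _. apply walsh_orth. intros E. apply Hd. rewrite <- E.
  apply Nat.divide_add_r.
  - replace (m - g)%nat with (m - 2 * g + g)%nat by lia. rewrite Nat.pow_add_r.
    apply Nat.divide_mul_l, Nat.divide_mul_l, Nat.divide_refl.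
  - apply Nat.divide_mul_l, Nat.divide_refl.
Qed.

Lemma sumR_const c n : sumR (fun _ => c) n = INR n * c.
Proof. induction n; simpl sumR. simpl; ring. rewrite IHn, S_INR. ring. Qed.

Theorem corollary2p2 (m g : nat) (lam : nat -> nat) (x : R) (l : nat) :
  (2 * g < m)%nat ->
  (forall n n' : nat, (1 <= n)%nat -> (n <= n')%nat -> (lam n <= lam n')%nat) ->
  (forall n : nat, (1 <= n)%nat -> (1 <= lam n <= n)%nat) ->
  0 <= x < 1 ->
  (2 ^ (m - g) <= l < 2 ^ m)%nat ->
  Nat.divide (2 ^ (m - 2 * g)) l ->
  Rabs (walsh_S l (P_poly m g) x) >= sqrt (INR g) / 4 ->
  (lam l < 2 ^ (m - 2 * g))%nat ->
  vallee_poussin lam l (P_poly m g) x = walsh_S l (P_poly m g) x /\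
  Rabs (vallee_poussin lam l (P_poly m g) x) >= sqrt (INR g) / 4.
Proof.
  intros Hm Hmono Hlam Hx Hl Hdl Habs Hlt.
  assert (Hp : (2 ^ (m - g) <> 0)%nat) by (apply Nat.pow_nonzero; lia).
  assert (Hll : (1 <= lam l <= l)%nat) by (apply Hlam; lia).
  assert (key : forall i, (i <= lam l)%nat ->
     walsh_S (l - i) (P_poly m g) x = walsh_S l (P_poly m g) x).
  { induction i as [|i IH]; intros Hi.
    - rewrite Nat.sub_0_r. reflexivity.
    - rewrite <- IH by lia.
      replace (l - i)%nat with (S (l - S i)) by lia.
      unfold walsh_S at 2. simpl sumR. fold (walsh_S (l - S i) (P_poly m g) x).
      rewrite coef_zero; auto. ring.
      intros H. assert (H2 : Nat.divide (2 ^ (m - 2 * g)) (l - (l - S i))).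
      { apply Nat.divide_sub_r; auto. }
      replace (l - (l - S i))%nat with (S i) in H2 by lia.
      apply Nat.divide_pos_le in H2; lia. }
  assert (E : vallee_poussin lam l (P_poly m g) x = walsh_S l (P_poly m g) x).
  { unfold vallee_poussin.
    rewrite (sumR_ext _ (fun _ => walsh_S l (P_poly m g) x)).
    - rewrite sumR_const, S_INR. field. pose proof (pos_INR (lam l)). lra.
    - intros i Hi. replace (l - lam l + i)%nat with (l - (lam l - i))%nat by lia.
      apply key. lia. }
  split; auto. rewrite E. auto.
Qed.
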